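(* Let $\mathbf{I}$ be a $d$-system of ideals in a ring $R$ and $A:=\mathscr{A}(R,\mathbf{I})$. Then (i) $Ae_dA\cong(Ae_d)^{\oplus d}$ as left $A$-modules; (ii) $e_dAe_d\cong R/I_{d,d+1}$ as rings; (iii) if $d\ge2$, then $A/(Ae_dA)\cong\mathscr{A}(R,\mathbf{I}')$ as rings, where $\mathbf{I}':=\{I_{ij}\mid1\le i,j\le d\}$ (which is a $(d-1)$-system of ideals in $R$).
   Context: A $d$-system of ideals in $R$ is a collection $\{I_{ij}\mid1\le i,j\le d+1\}$ of two-sided ideals with $I_{ij}I_{jk}\subset I_{ik}$ and $I_{ij}=R$ for $i\ge j$. $\mathscr{A}(R,\mathbf{I}):=\bigoplus_{1\le i,j\le d}I_{ij}/I_{i,d+1}$ with multiplication $(x+I_{i,d+1})(y+I_{k,d+1})=\delta_{jk}(xy+I_{i,d+1})\in I_{il}/I_{i,d+1}$ for $x\in I_{ij},y\in I_{kl}$. Put $e_k:=1+I_{k,d+1}\in I_{kk}/I_{k,d+1}$ for $1\le k\le d$. *)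

(* Defs.v *)
From HB Require Import structures.
From mathcomp Require Import all_boot all_order all_algebra.
Set Implicit Arguments. Unset Strict Implicit. Unset Printing Implicit Defensive.
Import GRing.Theory.
Local Open Scope ring_scope.

(* Subquotient ("partial setoid") presentation of rings and modules.  *)
(* A ring given by representatives: a carrier type T, a domain        *)
(* predicate (the representatives that are allowed), an equivalence   *)
(* relation (equality in the quotient) and operations on              *)
(* representatives.  The actual ring is  dom / eq.                    *)
Record pring (T : Type) := PRing {
  pdom : T -> Prop;
  peq  : T -> T -> Prop;
  padd : T -> T -> T;
  pmul : T -> T -> T;
  pone : T }.

Definition ring_iso T U (X : pring T) (Y : pring U) (f : T -> U) : Prop :=
  (forall x, pdom X x -> pdom Y (f x)) /\
    [/\ (forall x y, pdom X x -> pdom X y -> (peq X x y <-> peq Y (f x) (f y))),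
      (forall u, pdom Y u -> exists2 x, pdom X x & peq Y (f x) u),
      (forall x y, pdom X x -> pdom X y -> peq Y (f (padd X x y)) (padd Y (f x) (f y))),
      (forall x y, pdom X x -> pdom X y -> peq Y (f (pmul X x y)) (pmul Y (f x) (f y)))
    & peq Y (f (pone X)) (pone Y)].

Definition ring_isomorphic T U (X : pring T) (Y : pring U) : Prop :=
  exists f : T -> U, ring_iso X Y f.

Record pmod (A T : Type) := PMod {
  mdom : T -> Prop;
  meq  : T -> T -> Prop;
  madd : T -> T -> T;
  mact : A -> T -> T }.

Definition mod_iso A T U (S : pring A) (M : pmod A T) (N : pmod A U) (f : T -> U) : Prop :=
  [/\ (forall x, mdom M x -> mdom N (f x)),
      (forall x y, mdom M x -> mdom M y -> (meq M x y <-> meq N (f x) (f y))),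
      (forall u, mdom N u -> exists2 x, mdom M x & meq N (f x) u),
      (forall x y, mdom M x -> mdom M y -> meq N (f (madd M x y)) (madd N (f x) (f y)))
    & (forall a x, pdom S a -> mdom M x -> meq N (f (mact M a x)) (mact N a (f x)))].

Definition mod_isomorphic A T U (S : pring A) (M : pmod A T) (N : pmod A U) : Prop :=
  exists f : T -> U, mod_iso S M N f.

(* Ideals and d-systems (indices are 1-based, as in the paper).       *)
Definition two_sided_ideal (R : pzRingType) (J : R -> Prop) : Prop :=
  [/\ J 0,
      (forall x y, J x -> J y -> J (x - y)),
      (forall r x, J x -> J (r * x))
    & (forall r x, J x -> J (x * r))].

Definition dsystem (R : pzRingType) (d : nat) (I : nat -> nat -> R -> Prop) : Prop :=
  [/\ (forall i j, (1 <= i <= d.+1)%N -> (1 <= j <= d.+1)%N -> two_sided_ideal (I i j)),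
      (forall i j k, (1 <= i <= d.+1)%N -> (1 <= j <= d.+1)%N -> (1 <= k <= d.+1)%N ->
         forall x y, I i j x -> I j k y -> I i k (x * y))
    & (forall i j, (1 <= i <= d.+1)%N -> (1 <= j <= d.+1)%N -> (j <= i)%N ->
         forall x, I i j x)].

(* The algebra A(R, I) = (+)_{1<=i,j<=d} I_ij / I_{i,d+1}.            *)
(* An element is represented by a d x d matrix M with M i j in        *)
(* I_{i+1,j+1} (matrix index i : 'I_d stands for paper index i+1);    *)
(* two representatives are equal iff entrywise M i j - N i j lies in  *)
(* I_{i+1,d+1}.  The multiplication rule                              *)
(*   (x + I_{i,d+1})(y + I_{k,d+1}) = delta_jk (xy + I_{i,d+1})       *)
(* is exactly matrix multiplication on representatives.               *)
Section Construction.
Variables (R : pzRingType) (d : nat) (I : nat -> nat -> R -> Prop).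

Definition Amem (M : 'M[R]_d) : Prop := forall i j : 'I_d, I i.+1 j.+1 (M i j).
Definition Aeq (M N : 'M[R]_d) : Prop := forall i j : 'I_d, I i.+1 d.+1 (M i j - N i j).

Definition Aring : pring 'M[R]_d :=
  @PRing _ Amem Aeq (fun M N => M + N) (fun M N => M *m N) 1%:M.

(* e_k = 1 + I_{k,d+1} in the (k,k) component (paper index k). *)
Definition eidem (k : nat) : 'M[R]_d :=
  \matrix_(i, j) (((i == j) && ((i : nat).+1 == k)))%:R.

Definition ed : 'M[R]_d := eidem d.

Definition eAe : pring 'M[R]_d :=
  @PRing _ (fun M => Amem M /\ exists2 N, Amem N & Aeq M (ed *m N *m ed))
    Aeq (fun M N => M + N) (fun M N => M *m N) ed.

Definition RmodI : pring R :=
  @PRing _ (fun _ => True) (fun x y => I d d.+1 (x - y))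
    (fun x y => x + y) (fun x y => x * y) 1.

Definition AeAmem (M : 'M[R]_d) : Prop :=
  Amem M /\ exists s : seq ('M[R]_d * 'M[R]_d),
    (forall p, p \in s -> Amem p.1 /\ Amem p.2) /\
    Aeq M (\sum_(p <- s) p.1 *m ed *m p.2).

Definition AeA : pmod 'M[R]_d 'M[R]_d :=
  @PMod _ _ AeAmem Aeq (fun M N => M + N) (fun a M => a *m M).

Definition Aemem (M : 'M[R]_d) : Prop :=
  Amem M /\ exists2 N, Amem N & Aeq M (N *m ed).

Definition AeSum : pmod 'M[R]_d ('I_d -> 'M[R]_d) :=
  @PMod _ _ (fun F => forall k, Aemem (F k)) (fun F G => forall k, Aeq (F k) (G k))
    (fun F G k => F k + G k) (fun a F k => a *m F k).

Definition AmodJ : pring 'M[R]_d :=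
  @PRing _ Amem (fun M N => AeAmem (M - N))
    (fun M N => M + N) (fun M N => M *m N) 1%:M.

End Construction.

(* Main.v *)
Require Import Defs.
From HB Require Import structures.
From mathcomp Require Import all_boot all_order all_algebra zify.
Set Implicit Arguments. Unset Strict Implicit.
Import GRing.Theory.
Local Open Scope ring_scope.

Ltac ords := repeat match goal with
  | i : ordinal _ |- _ => lazymatch goal with
      | _ : is_true (nat_of_ord i < _)%N |- _ => fail
      | _ => have := ltn_ord i; intro end end.
Ltac okt := ords; lia.

Section Ideals.
Lemma I0 (R : pzRingType) d (I : nat -> nat -> R -> Prop) (hI : dsystem d I) i j :
  (1 <= i <= d.+1)%N -> (1 <= j <= d.+1)%N -> I i j 0.
Proof. by case: hI => h _ _ hi hj; case: (h i j hi hj). Qed.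
Lemma IB (R : pzRingType) d (I : nat -> nat -> R -> Prop) (hI : dsystem d I) i j x y :
  (1 <= i <= d.+1)%N -> (1 <= j <= d.+1)%N -> I i j x -> I i j y -> I i j (x - y).
Proof. by case: hI => h _ _ hi hj; case: (h i j hi hj) => _ H _ _; apply: H. Qed.
Lemma IN (R : pzRingType) d (I : nat -> nat -> R -> Prop) (hI : dsystem d I) i j x :
  (1 <= i <= d.+1)%N -> (1 <= j <= d.+1)%N -> I i j x -> I i j (- x).
Proof. move=> hi hj h; rewrite -sub0r. apply: (IB hI) => //; exact: (I0 hI). Qed.
Lemma ID (R : pzRingType) d (I : nat -> nat -> R -> Prop) (hI : dsystem d I) i j x y :
  (1 <= i <= d.+1)%N -> (1 <= j <= d.+1)%N -> I i j x -> I i j y -> I i j (x + y).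
Proof. move=> hi hj h1 h2; rewrite -[y]opprK; apply: (IB hI) => //; exact: (IN hI). Qed.
Lemma IMl (R : pzRingType) d (I : nat -> nat -> R -> Prop) (hI : dsystem d I) i j r x :
  (1 <= i <= d.+1)%N -> (1 <= j <= d.+1)%N -> I i j x -> I i j (r * x).
Proof. by case: hI => h _ _ hi hj; case: (h i j hi hj) => _ _ H _; apply: H. Qed.
Lemma IMr (R : pzRingType) d (I : nat -> nat -> R -> Prop) (hI : dsystem d I) i j r x :
  (1 <= i <= d.+1)%N -> (1 <= j <= d.+1)%N -> I i j x -> I i j (x * r).
Proof. by case: hI => h _ _ hi hj; case: (h i j hi hj) => _ _ _ H; apply: H. Qed.
Lemma Iall (R : pzRingType) d (I : nat -> nat -> R -> Prop) (hI : dsystem d I) i j x :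
  (1 <= i <= d.+1)%N -> (1 <= j <= d.+1)%N -> (j <= i)%N -> I i j x.
Proof. by case: hI => _ _ h hi hj hji; apply: h. Qed.
Lemma Imono (R : pzRingType) d (I : nat -> nat -> R -> Prop) (hI : dsystem d I) i j k x :
  (1 <= i <= d.+1)%N -> (1 <= j <= d.+1)%N -> (1 <= k <= d.+1)%N -> (j <= k)%N ->
  I i k x -> I i j x.
Proof.
move=> hi hj hk hjk h; rewrite -[x]mulr1; case: hI => h1 h2 h3.
by apply: (h2 i k j) => //; apply: h3.
Qed.
Lemma Isum (R : pzRingType) d (I : nat -> nat -> R -> Prop) (hI : dsystem d I) i j
  (T : eqType) (s : seq T) (F : T -> R) :
  (1 <= i <= d.+1)%N -> (1 <= j <= d.+1)%N -> (forall p, p \in s -> I i j (F p)) ->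
  I i j (\sum_(p <- s) F p).
Proof.
move=> hi hj h; rewrite big_seq; apply: big_ind => //; first exact: (I0 hI).
by move=> x y; apply: (ID hI).
Qed.
End Ideals.

Lemma mul_delta_r (R : pzRingType) m n p (A : 'M[R]_(m,n)) (k : 'I_n) (l : 'I_p) i j :
  (A *m delta_mx k l) i j = A i k * (j == l)%:R.
Proof.
rewrite !mxE (bigD1 k) //= big1 => [|x /negbTE hx]; last by rewrite !mxE hx mulr0.
by rewrite !mxE eqxx addr0.
Qed.
Lemma mul_delta_l (R : pzRingType) m n p (A : 'M[R]_(n,p)) (k : 'I_m) (l : 'I_n) i j :
  (delta_mx k l *m A) i j = (i == k)%:R * A l j.
Proof.
rewrite !mxE (bigD1 l) //= big1 => [|x /negbTE hx]; last by rewrite !mxE hx andbF mul0r.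
by rewrite !mxE eqxx andbT addr0.
Qed.
Lemma edE (R : pzRingType) n : ed R n.+1 = delta_mx ord_max ord_max.
Proof.
apply/matrixP => i j; rewrite !mxE.
case: (eqVneq i j) => [<-|hij] /=.
  by rewrite andbb; congr (_%:R); apply/eqP/eqP => [h|->] //; apply: val_inj => /=; lia.
case: (eqVneq i ord_max) => [hi|] //=; case: (eqVneq j ord_max) => [hj|] //=.
by move: hij; rewrite hi hj eqxx.
Qed.

Lemma Ibig (R : pzRingType) d (I : nat -> nat -> R -> Prop) (hI : dsystem d I) i j
  (T : Type) (s : seq T) (P : pred T) (F : T -> R) :
  (1 <= i <= d.+1)%N -> (1 <= j <= d.+1)%N -> (forall p, P p -> I i j (F p)) ->
  I i j (\sum_(p <- s | P p) F p).
Proof.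
move=> hi hj h; apply: big_ind => //; first exact: (I0 hI).
by move=> x y; apply: (ID hI).
Qed.

Lemma eAe_off (R : pzRingType) n (I : nat -> nat -> R -> Prop) (hI : dsystem n.+1 I)
  (M N : 'M[R]_n.+1) : Aeq I M (ed R n.+1 *m N *m ed R n.+1) ->
  forall i j, ~~ ((i == ord_max) && (j == ord_max)) -> I i.+1 n.+2 (M i j).
Proof.
move=> h i j hij; have := h i j; rewrite edE mul_delta_r mul_delta_l.
case: (eqVneq i ord_max) hij => [_|_] /=; case: (eqVneq j ord_max) => //= _ _;
  by rewrite ?mulr0 ?mul0r subr0.
Qed.

Lemma part2 (R : pzRingType) n (I : nat -> nat -> R -> Prop) (hI : dsystem n.+1 I) :
  ring_isomorphic (eAe n.+1 I) (RmodI n.+1 I).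
Proof.
exists (fun M => M ord_max ord_max); split => [x _ //|]; split.
- move=> x y [hx [N hN ex]] [hy [N' hN' ey]] /=; split => [h|h i j]; first exact: (h ord_max ord_max).
  case: (boolP ((i == ord_max) && (j == ord_max))) => [/andP[/eqP-> /eqP->] //|hij].
  by apply: (IB hI); [okt|okt|exact: (eAe_off hI ex)|exact: (eAe_off hI ey)].
- move=> u _; pose X : 'M[R]_n.+1 := \matrix_(i, j) (((i == ord_max) && (j == ord_max))%:R * u).
  have hX : Amem I X.
    move=> i j; rewrite mxE; case: (eqVneq i ord_max) => [->|_] /=;
      case: (eqVneq j ord_max) => [->|_] /=; rewrite ?mul0r ?mul1r;
      by [apply: (I0 hI); okt | apply: (Iall hI); okt].
  exists X; last by rewrite /= mxE !eqxx mul1r subrr; apply: (I0 hI); okt.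
  split => //; exists X => // i j; rewrite edE mul_delta_r mul_delta_l !mxE !eqxx /=.
  case: eqP => _; case: eqP => _ /=;
    rewrite ?mul0r ?mul1r ?mulr0 ?mulr1 subrr; apply: (I0 hI); okt.
- by move=> x y _ _ /=; rewrite !mxE subrr; apply: (I0 hI); okt.
- move=> x y [hx [N hN ex]] [hy _] /=.
  rewrite mxE (bigD1 ord_max) //= addrAC subrr add0r.
  apply: (Ibig hI) => [||k hk]; try okt; apply: (IMr hI); try okt.
  by apply: (@eAe_off _ _ _ hI _ _ ex ord_max k); rewrite (negbTE hk) andbF.
- by rewrite /eAe /RmodI /= edE mxE !eqxx /= subrr; apply: (I0 hI); okt.
Qed.

Lemma Aeq_refl (R : pzRingType) n (I : nat -> nat -> R -> Prop) (hI : dsystem n.+1 I)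
  (M : 'M[R]_n.+1) : Aeq I M M.
Proof. by move=> i j; rewrite subrr; apply: (I0 hI); okt. Qed.

Lemma AeA_col (R : pzRingType) n (I : nat -> nat -> R -> Prop) (hI : dsystem n.+1 I)
  (M : 'M[R]_n.+1) : AeAmem I M -> forall i j : 'I_n.+1, I i.+1 n.+1 (M i j).
Proof.
move=> [hM [s [hs e]]] i j.
have hS : I i.+1 n.+1 ((\sum_(p <- s) p.1 *m ed R n.+1 *m p.2) i j).
  rewrite summxE big_seq; apply: (Ibig hI) => [||p /hs [h1 _]]; try okt.
  rewrite -mulmxA edE mxE; apply: (Ibig hI) => [||k _]; try okt.
  rewrite mul_delta_l; case: (eqVneq k ord_max) => [->|_].
    by rewrite mul1r; apply: (IMr hI); [okt|okt|exact: (h1 i ord_max)].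
  by rewrite mul0r mulr0; apply: (I0 hI); okt.
rewrite -[M i j](subrK ((\sum_(p <- s) p.1 *m ed R n.+1 *m p.2) i j)).
apply: (ID hI) => //; try okt.
by apply: (Imono hI) (e i j); okt.
Qed.

Lemma AeA_of (R : pzRingType) n (I : nat -> nat -> R -> Prop) (hI : dsystem n.+1 I)
  (M : 'M[R]_n.+1) : (forall i j : 'I_n.+1, I i.+1 n.+1 (M i j)) -> AeAmem I M.
Proof.
move=> hM; split.
  by move=> i j; apply: (Imono hI) (hM i j); okt.
exists [seq (M *m delta_mx j ord_max, delta_mx ord_max j) | j <- index_enum 'I_n.+1].
split.
  move=> p /mapP [j _ ->] /=; split => a b.
    rewrite mul_delta_r; case: (eqVneq b ord_max) => [->|_].
      by rewrite mulr1; exact: hM.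
    by rewrite mulr0; apply: (I0 hI); okt.
  rewrite mxE; case: (eqVneq a ord_max) => [->|_] /=; last by apply: (I0 hI); okt.
  case: (eqVneq b j) => [->|_] /=; last by apply: (I0 hI); okt.
  by apply: (Iall hI); have := ltn_ord j; lia.
move=> a b; rewrite summxE big_map.
rewrite (eq_bigr (fun j => M a j * (b == j)%:R)); last first.
  by move=> j _; rewrite edE -!mulmxA !mul_delta_mx mul_delta_r.
rewrite (bigD1 b) //= eqxx mulr1 big1 ?addr0.
  by rewrite subrr; apply: (I0 hI); okt.
by move=> j; rewrite eq_sym => /negbTE ->; rewrite mulr0.
Qed.

Lemma part1 (R : pzRingType) n (I : nat -> nat -> R -> Prop) (hI : dsystem n.+1 I) :
  mod_isomorphic (Aring n.+1 I) (AeA n.+1 I) (AeSum n.+1 I).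
Proof.
exists (fun M k => M *m delta_mx k ord_max); split.
- move=> x hx k /=; have hc := AeA_col hI hx; split.
    move=> i j; rewrite mul_delta_r; case: (eqVneq j ord_max) => [->|_].
      by rewrite mulr1; exact: hc.
    by rewrite mulr0; apply: (I0 hI); okt.
  exists (x *m delta_mx k ord_max).
    move=> i j; rewrite mul_delta_r; case: (eqVneq j ord_max) => [->|_].
      by rewrite mulr1; exact: hc.
    by rewrite mulr0; apply: (I0 hI); okt.
  by rewrite edE -mulmxA mul_delta_mx; exact: Aeq_refl.
- move=> x y hx hy /=; split => [h k i j|h i j].
    rewrite !mul_delta_r -mulrBl; apply: (IMr hI); try okt; exact: h.
  by have := h j i ord_max; rewrite !mul_delta_r eqxx !mulr1.
- move=> u /= hu; exists (\matrix_(i, j) u j i ord_max).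
    apply: (AeA_of hI) => i j; rewrite mxE; case: (hu j) => h _; exact: (h i ord_max).
  move=> k i j; rewrite mul_delta_r mxE; case: (eqVneq j ord_max) => [->|hj].
    by rewrite mulr1 subrr; apply: (I0 hI); okt.
  rewrite mulr0 sub0r; apply: (IN hI); try okt.
  case: (hu k) => _ [N _ e]; have := e i j; rewrite edE mul_delta_r (negbTE hj) mulr0 subr0.
  done.
- by move=> x y _ _ /= k; rewrite mulmxDl; exact: Aeq_refl.
- by move=> a x _ _ /= k; rewrite mulmxA; exact: Aeq_refl.
Qed.

Lemma dsys_pred (R : pzRingType) m (I : nat -> nat -> R -> Prop) (hI : dsystem m.+2 I) :
  dsystem m.+1 I.
Proof.
case: hI => h1 h2 h3; split.
- by move=> i j hi hj; apply: h1; lia.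
- by move=> i j k hi hj hk; apply: h2; lia.
- by move=> i j hi hj hji; apply: h3; lia.
Qed.

Lemma ord_cases m (i : 'I_m.+2) :
  i = ord_max \/ exists i' : 'I_m.+1, i = widen_ord (leqnSn m.+1) i'.
Proof.
case: (eqVneq i ord_max) => [->|h]; [by left|right].
have hi : (i < m.+1)%N.
  by move: h (ltn_ord i); rewrite -val_eqE /=; lia.
by exists (Ordinal hi); apply: val_inj.
Qed.

Lemma part3 (R : pzRingType) m (I : nat -> nat -> R -> Prop) (hI : dsystem m.+2 I) :
  ring_isomorphic (AmodJ m.+2 I) (Aring m.+1 I).
Proof.
pose w := widen_ord (leqnSn m.+1).
exists (fun M : 'M[R]_m.+2 => \matrix_(i, j) M (w i) (w j)); split.
  by move=> x hx i j; rewrite mxE; exact: (hx (w i) (w j)).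
split.
- move=> x y hx hy /=; split => [h i j|h].
    have := AeA_col hI h (w i) (w j); rewrite !mxE; done.
  apply: (AeA_of hI) => i j; rewrite !mxE.
  case: (ord_cases i) => [->|[i' ->]].
    by rewrite /=; apply: (Iall hI); okt.
  case: (ord_cases j) => [->|[j' ->]].
    by rewrite /=; apply: (IB hI); try okt; [exact: (hx (w i') ord_max)|exact: (hy (w i') ord_max)].
  by have := h i' j'; rewrite !mxE.
- move=> u hu; exists (\matrix_(i, j) if ((i : nat) < m.+1)%N && ((j : nat) < m.+1)%N
                       then u (inord i) (inord j) else 0).
    move=> i j; rewrite mxE; case: ifP => [/andP [hi hj]|_]; last by apply: (I0 hI); okt.
    by have := hu (inord i) (inord j); rewrite !inordK.
  move=> i j /=; rewrite !mxE /= !ltn_ord /=.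
  have -> : inord (w i) = i by apply: val_inj; rewrite /= inordK.
  have -> : inord (w j) = j by apply: val_inj; rewrite /= inordK.
  by rewrite subrr; apply: (I0 hI); okt.
- by move=> x y _ _ i j /=; rewrite !mxE subrr; apply: (I0 hI); okt.
- move=> x y hx hy i j /=; rewrite !mxE big_ord_recr /=.
  under [X in _ - X]eq_bigr do rewrite !mxE.
  rewrite addrAC subrr add0r; apply: (IMr hI); try okt.
  exact: (hx (w i) ord_max).
- move=> i j /=; rewrite !mxE.
  have -> : (w i == w j) = (i == j) by [].
  by rewrite subrr; apply: (I0 hI); okt.
Qed.

Theorem proposition3p7 (R : pzRingType) (d : nat) (I : nat -> nat -> R -> Prop)
    (hd : (0 < d)%N) (hI : dsystem d I) :
  [/\ mod_isomorphic (Aring d I) (AeA d I) (AeSum d I),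
      ring_isomorphic (eAe d I) (RmodI d I)
    & ((1 < d)%N -> dsystem d.-1 I /\ ring_isomorphic (AmodJ d I) (Aring d.-1 I))].
Proof.
case: d hd hI => [//|n] _ hI.
split; [exact: part1 | exact: part2 |].
case: n hI => [//|m] hI _.
split; [exact: dsys_pred hI | exact: part3 hI].
Qed.
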